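(* Let $q$ be an odd prime power and let $P(q^2)$ be the Paley graph on $\mathbb{F}_{q^2}$, with non-principal eigenvalues $\lambda_1=\frac{-1+q}{2}$ and $\lambda_2=\frac{-1-q}{2}$. For each $i\in\{1,2\}$, the minimum cardinality of the support of a $\lambda_i$-eigenfunction of $P(q^2)$ equals $q+1$. *)

(* Defs.v *)
From HB Require Import structures.
From mathcomp Require Import all_boot all_order all_algebra all_field.
From mathcomp Require Import reals.
Set Implicit Arguments. Unset Strict Implicit. Unset Printing Implicit Defensive.
Import Order.TTheory GRing.Theory Num.Theory.
Local Open Scope ring_scope.

Definition odd_prime_power (q : nat) : Prop :=
  exists p k : nat, [/\ prime p, odd p, (0 < k)%N & q = (p ^ k)%N].

Definition paley_adj (F : finFieldType) (x y : F) : bool :=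
  (x != y) && [exists z : F, z ^+ 2 == x - y].

Definition paley_eigenfunction (F : finFieldType) (R : realType) (lam : R)
    (f : F -> R) : Prop :=
  (exists x, f x != 0) /\
  (forall x : F, \sum_(y : F | paley_adj x y) f y = lam * f x).

Definition supp (F : finFieldType) (R : realType) (f : F -> R) : {set F} :=
  [set x | f x != 0].

(* Main.v *)
Require Import Defs.
From HB Require Import structures.
From mathcomp Require Import all_boot all_order all_algebra all_field.
From mathcomp Require Import cyclic.
From mathcomp Require Import reals.
From mathcomp Require Import ring lra zify.
Import Order.TTheory GRing.Theory Num.Theory.
Set Implicit Arguments. Unset Strict Implicit.
Local Open Scope ring_scope.
Lemma exists_prim (F : finFieldType) :
  exists g : F, (#|F|.-1).-primitive_root g.
Proof.
pose rs := enum [pred x : F | x != 0].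
have H : has (#|F|.-1).-primitive_root rs.
  apply: has_prim_root.
  - by rewrite -subn1 subn_gt0 finNzRing_gt1.
  - apply/allP => x; rewrite mem_enum inE => nz.
    rewrite unity_rootE; apply/eqP; apply: (mulIf nz).
    by rewrite mul1r -exprSr prednK ?expf_card // (ltn_trans _ (finNzRing_gt1 F)).
  - exact: enum_uniq.
  - by rewrite -cardE cardC1.
by case/hasP: H => g _ Hg; exists g.
Qed.
Lemma card_unity (F : finFieldType) (d : nat) :
  (d %| #|F|.-1)%N -> (0 < d)%N -> #|[set x : F | x ^+ d == 1]| = d.
Proof.
move=> dd d0; have [g pg] := exists_prim F.
have ph := dvdn_prim_root pg dd; set h := g ^+ _ in ph.
have -> : [set x : F | x ^+ d == 1] = [set h ^+ (val i) | i : 'I_d].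
  apply/setP => x; rewrite inE; apply/idP/imsetP.
    by move/eqP/(prim_rootP ph) => [i ->]; exists i.
  by move=> [i _ ->]; rewrite exprAC (prim_expr_order ph) expr1n.
rewrite card_imset ?card_ord // => i j /eqP.
by rewrite (eq_prim_root_expr ph) !modn_small ?ltn_ord // => /eqP /val_inj.
Qed.
Lemma Nval (F : finFieldType) q m : #|F| = (q ^ 2)%N -> q.+1 = (m * 2)%N ->
  #|F|.-1 = (q.-1 * m * 2)%N.
Proof. move=> hF hm; rewrite hF -mulnA -hm; case: q {hF hm} => // q; nia. Qed.

Lemma unitN (F : finFieldType) (x : F) : x != 0 -> x ^+ #|F|.-1 = 1.
Proof.
move=> nz; apply: (mulIf nz).
by rewrite mul1r -exprSr prednK ?expf_card // (ltn_trans _ (finNzRing_gt1 F)).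
Qed.

Lemma chi_sq (F : finFieldType) q m (x : F) : #|F| = (q ^ 2)%N -> q.+1 = (m * 2)%N ->
  (1 < q)%N -> (x ^+ (q.-1 * m)) ^+ 2 = (x != 0)%:R.
Proof.
move=> hF hm q1; have pos : (0 < q.-1 * m)%N by rewrite muln_gt0; apply/andP; split; lia.
case: eqP => [->|/eqP nz].
  by rewrite expr0n (gtn_eqF pos) expr0n.
by rewrite -exprM -(Nval hF hm) unitN.
Qed.

Lemma chi_pm (F : finFieldType) q m (x : F) : #|F| = (q ^ 2)%N -> q.+1 = (m * 2)%N ->
  (1 < q)%N -> x != 0 -> x ^+ (q.-1 * m) = 1 \/ x ^+ (q.-1 * m) = -1.
Proof.
move=> hF hm q1 nz; have := chi_sq x hF hm q1; rewrite nz => /eqP.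
by rewrite sqrf_eq1 => /orP[/eqP|/eqP]; [left|right].
Qed.

Lemma euler (F : finFieldType) q m (x : F) : #|F| = (q ^ 2)%N -> q.+1 = (m * 2)%N ->
  (1 < q)%N -> 
  (x ^+ (q.-1 * m) == 1) = (x != 0) && [exists z, z ^+ 2 == x].
Proof.
move=> hF hm q1; have NE := Nval hF hm.
have pos : (0 < q.-1 * m)%N by rewrite muln_gt0; apply/andP; split; lia.
apply/idP/andP.
  move=> /eqP h; have nz : x != 0.
    by apply/eqP => x0; move: h; rewrite x0 expr0n gtn_eqF // => /eqP; rewrite eq_sym oner_eq0.
  split => //; have [g pg] := exists_prim F.
  have [i hi] := prim_rootP pg (unitN nz); move: (nat_of_ord i) hi => {}i hi.
  have : (#|F|.-1 %| i * (q.-1 * m))%N.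
    by rewrite (prim_order_dvd pg) exprM -hi h.
  rewrite NE. move=> hd. have : (2 %| i)%N by rewrite -(@dvdn_pmul2l (q.-1 * m)) // (mulnC _ i). case/dvdnP => j hj.
  by apply/existsP; exists (g ^+ j); rewrite -exprM hi hj.
move=> [nz /existsP [z /eqP hz]]; rewrite -hz -exprM.
rewrite mulnC -NE unitN //; apply: contra nz => /eqP z0.
by rewrite -hz z0 expr0n.
Qed.

Lemma adjE (F : finFieldType) q m (x y : F) : #|F| = (q ^ 2)%N -> q.+1 = (m * 2)%N ->
  (1 < q)%N -> paley_adj x y = ((x - y) ^+ (q.-1 * m) == 1).
Proof.
move=> hF hm q1; rewrite (euler _ hF hm q1) /paley_adj subr_eq0; congr (_ && _).
Qed.
Lemma frobN (F : finFieldType) q (hfrob : forall x y : F, (x + y) ^+ q = x ^+ q + y ^+ q)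
  (q0 : (0 < q)%N) (x : F) : (- x) ^+ q = - x ^+ q.
Proof.
apply/eqP; rewrite -subr_eq0 opprK addrC -hfrob subrr expr0n.
by rewrite gtn_eqF.
Qed.

Definition Kset (F : finFieldType) q := [set t : F | t ^+ q == t].

Definition fU (R : realType) (F : finFieldType) q m (x : F) : R :=
  if x ^+ q.+1 == 1 then (if x ^+ m == 1 then 1 else -1) else 0.

Lemma alg1 (F : fieldType) (X Y Z c : F) : X ^+ 2 = 1 -> Y ^+ 2 = 1 ->
  c * Y = -1 -> Z != 0 -> Y * X^-1 * Z * (Z * c)^-1 = - X.
Proof.
move=> hX hY hc hZ.
have Xnz : X != 0 by apply/eqP => X0; move: hX; rewrite X0 expr0n /= => /eqP; rewrite eq_sym oner_eq0.
have Ynz : Y != 0 by apply/eqP => Y0; move: hY; rewrite Y0 expr0n /= => /eqP; rewrite eq_sym oner_eq0.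
have hc' : c = - Y.
  apply: (mulIf Ynz); rewrite hc mulNr -expr2 hY.
  done.
have hX' : X^-1 = X by apply: (mulIf Xnz); rewrite mulVf // -expr2 hX.
rewrite hc' hX'; field; by rewrite oppr_eq0 Ynz hZ.
Qed.

Lemma core_sum (R : realType) (F : finFieldType) q m
  (hm : q.+1 = (m * 2)%N) (q1 : (1 < q)%N)
  (hfrob : forall x y : F, (x + y) ^+ q = x ^+ q + y ^+ q)
  (hqq : forall x : F, (x ^+ q) ^+ q = x) (h2 : (1 : F) != -1)
  (u s : F) : u ^+ q.+1 = 1 -> s != 0 -> s ^+ (q.-1 * m) * (-1) ^+ m = -1 ->
  \sum_(t in Kset F q) fU R q m (u + t * s) = 0.
Proof.
move=> hu snz hchi.
have unz : u != 0.
  by apply/eqP => u0; move: hu; rewrite u0 expr0n /= => /eqP; rewrite eq_sym oner_eq0.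
have hua : u ^+ q = u^-1 by apply: (mulIf unz); rewrite -exprSr hu mulVf.
have bnz : s ^+ q != 0 by rewrite expf_neq0.
have q0 : (0 < q)%N by lia.
set b := s ^+ q.
pose t1 := - (u^-1 * s + b * u) / (b * s).
have key : forall t, t \in Kset F q ->
    (u + t * s) ^+ q.+1 = 1 + t * (b * s) * (t - t1).
  move=> t; rewrite inE => /eqP ht.
  rewrite exprS hfrob exprMn ht hua /t1 /b; field.
  by rewrite snz bnz.
have t1K : t1 \in Kset F q.
  rewrite inE /t1 /b; apply/eqP.
  rewrite !exprMn frobN // !exprVn hfrob !exprMn !hqq exprVn hua invrK.
  field; by rewrite snz bnz.
pose u' := u + t1 * s.
have hu' : u' ^+ q.+1 = 1 by rewrite /u' key // subrr mulr0 addr0.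
have hum : (u ^+ m) ^+ 2 = 1 by rewrite -exprM -hm hu.
have u'eq : u' = (-1) * u^-1 * s * b^-1 by rewrite /u' /t1; field; rewrite unz bnz.
have e2 : s ^+ m * s ^+ (q.-1 * m) = b ^+ m.
  by rewrite -exprD /b -exprM; congr (_ ^+ _); rewrite -[in RHS](prednK q0) mulSn.
have hu'm : u' ^+ m = - u ^+ m.
  rewrite u'eq !exprMn !exprVn -e2; apply: alg1 => //; last by rewrite expf_neq0.
  by rewrite -exprM mulnC exprM sqrrN !expr1n.
have hpm : u ^+ m = 1 \/ u ^+ m = -1.
  by move/eqP: hum; rewrite sqrf_eq1 => /orP[/eqP|/eqP]; [left|right].
have h2' : (-1 : F) != 1 by rewrite eq_sym.
have t1nz : t1 != 0.
  apply/eqP => t10; move: hu'm; rewrite /u' t10 mul0r addr0.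
  by case: hpm => ->; rewrite ?opprK => /eqP; rewrite ?(negbTE h2) ?(negbTE h2').
have K0 : (0 : F) \in Kset F q by rewrite inE expr0n gtn_eqF.
rewrite (bigD1 0) //= (bigD1 t1) /=; last by rewrite t1K t1nz.
rewrite big1; last first.
  move=> t /andP [/andP [tK t0] tt1]; rewrite /fU key // -subr_eq0 addrC addKr.
  by rewrite !mulf_eq0 (negbTE t0) (negbTE snz) (negbTE bnz) subr_eq0 (negbTE tt1).
rewrite mul0r addr0 addr0 /fU hu eqxx -/u' hu' eqxx hu'm.
by case: hpm => ->; rewrite ?opprK eqxx ?(negbTE h2') ?subrr ?addNr.
Qed.

Lemma Kset_add (F : finFieldType) q (hfrob : forall x y : F, (x + y) ^+ q = x ^+ q + y ^+ q)
  (t t0 : F) : t0 \in Kset F q -> (t + t0 \in Kset F q) = (t \in Kset F q).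
Proof. by rewrite !inE => /eqP h; rewrite hfrob h (inj_eq (addIr t0)). Qed.

Lemma line_sum (R : realType) (F : finFieldType) q m
  (hm : q.+1 = (m * 2)%N) (q1 : (1 < q)%N)
  (hfrob : forall x y : F, (x + y) ^+ q = x ^+ q + y ^+ q)
  (hqq : forall x : F, (x ^+ q) ^+ q = x) (h2 : (1 : F) != -1)
  (v s : F) : s != 0 -> s ^+ (q.-1 * m) * (-1) ^+ m = -1 ->
  \sum_(t in Kset F q) fU R q m (v + t * s) = 0.
Proof.
move=> snz hchi.
case: (pickP [pred t | (t \in Kset F q) && ((v + t * s) ^+ q.+1 == 1)]) => [t0 /andP [t0K /eqP hu]|none].
  rewrite (reindex_inj (addIr t0)) /=.
  rewrite (eq_bigl (fun t => t \in Kset F q)); last by move=> t; rewrite Kset_add.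
  transitivity (\sum_(t in Kset F q) fU R q m (v + t0 * s + t * s)); last first.
    exact: (core_sum R hm q1 hfrob hqq h2 hu snz hchi).
  apply: eq_bigr => t _.
  by congr fU; ring.
apply: big1 => t tK; rewrite /fU; move: (none t); rewrite /= tK /= => ->.
done.
Qed.

Lemma nbr (R : realType) (F : finFieldType) q (f : F -> R) (T : {set F}) :
  (forall t s, t \in Kset F q -> t != 0 -> s \in T -> t * s \in T) ->
  (forall v s, s \in T -> \sum_(t in Kset F q) f (v + t * s) = 0) ->
  (0 < q)%N -> #|Kset F q| = q -> (-1 : F) \in Kset F q ->
  forall v, (\sum_(s in T) f (v - s)) * (q.-1)%:R = - (#|T|%:R) * f v.
Proof.
move=> hT hl q0 hK hm1 v.
have K0 : (0 : F) \in Kset F q by rewrite inE expr0n gtn_eqF.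
have cK : #|Kset F q :\ 0| = q.-1.
  have e := cardsD1 0 (Kset F q); rewrite K0 hK in e; rewrite [in RHS]e; exact: erefl.
have step : forall t, t \in Kset F q :\ 0 ->
    \sum_(s in T) f (v - s) = \sum_(s in T) f (v - t * s).
  move=> t; rewrite in_setD1 => /andP [tnz tK].
  rewrite (reindex_inj (mulfI tnz)) /=; apply: eq_bigl => s.
  apply/idP/idP => [|sT]; last exact: hT.
  move=> tsT; have := hT t^-1 (t * s).
  rewrite mulKf // => -> //; last by rewrite invr_eq0.
  by rewrite inE exprVn; rewrite inE in tK; rewrite (eqP tK).
rewrite -cK mulr_natr -sumr_const (eq_bigr _ step) exchange_big /=.
rewrite mulNr mulr_natl -sumr_const -sumrN; apply: eq_bigr => s sT.
have ns : - s \in T.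
  by rewrite -mulN1r; apply: hT => //; rewrite oppr_eq0 oner_eq0.
have := hl v (- s) ns; rewrite (bigD1 0) //= mul0r addr0 => e.
apply: (addrI (f v)); rewrite subrr -[RHS]e; congr (_ + _).
by apply: eq_big => [t|t _]; [rewrite in_setD1 andbC | rewrite mulrN].
Qed.
Lemma card_Kset (F : finFieldType) q m : #|F| = (q ^ 2)%N -> q.+1 = (m * 2)%N ->
  (1 < q)%N -> #|Kset F q| = q.
Proof.
move=> hF hm q1; have NE := Nval hF hm.
have -> : Kset F q = 0 |: [set t : F | t ^+ q.-1 == 1].
  apply/setP => t; rewrite !inE; case: (eqVneq t 0) => [->|tnz] /=.
    by rewrite expr0n (gtn_eqF (ltnW q1)) /= eqxx.
  rewrite -{1}(prednK (ltnW q1)) exprSr; apply/eqP/eqP => [h|->]; last by rewrite mul1r.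
  by apply: (mulIf tnz); rewrite mul1r.
have q10 : (q.-1 == 0)%N = false by apply/negbTE; lia.
rewrite cardsU1 inE expr0n q10 /= eq_sym oner_eq0 /= card_unity.
- by lia.
- by rewrite NE; apply/dvdnP; exists (m * 2)%N; nia.
- by lia.
Qed.

Lemma m1K (F : finFieldType) q (hfrob : forall x y : F, (x + y) ^+ q = x ^+ q + y ^+ q)
  (q0 : (0 < q)%N) : (-1 : F) \in Kset F q.
Proof. by rewrite inE frobN // expr1n. Qed.

Lemma chiK (F : finFieldType) q m (t : F) : (0 < q)%N -> t \in Kset F q -> t != 0 ->
  t ^+ (q.-1 * m) = 1.
Proof.
move=> q0; rewrite inE => /eqP ht tnz.
have h1 : t ^+ q.-1 = 1.
  by apply: (mulIf tnz); rewrite -exprSr prednK // ht mul1r.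
by rewrite exprM h1 expr1n.
Qed.

Lemma card_S (F : finFieldType) q m : #|F| = (q ^ 2)%N -> q.+1 = (m * 2)%N ->
  (1 < q)%N -> #|[set s : F | s ^+ (q.-1 * m) == 1]| = (q.-1 * m)%N.
Proof.
move=> hF hm q1; have NE := Nval hF hm.
have pos : (0 < q.-1 * m)%N by rewrite muln_gt0; apply/andP; split; lia.
by rewrite card_unity // NE dvdn_mulr.
Qed.

Lemma card_U (F : finFieldType) q m : #|F| = (q ^ 2)%N -> q.+1 = (m * 2)%N ->
  (1 < q)%N -> #|[set s : F | s ^+ q.+1 == 1]| = q.+1.
Proof.
move=> hF hm q1; have NE := Nval hF hm.
by rewrite card_unity // NE hm -mulnA dvdn_mull.
Qed.

Lemma card_NS (F : finFieldType) q m : #|F| = (q ^ 2)%N -> q.+1 = (m * 2)%N ->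
  (1 < q)%N -> #|[set s : F | (s != 0) && (s ^+ (q.-1 * m) != 1)]| = (q.-1 * m)%N.
Proof.
move=> hF hm q1; have NE := Nval hF hm.
have pos : (0 < q.-1 * m)%N by rewrite muln_gt0; apply/andP; split; lia.
have -> : [set s : F | (s != 0) && (s ^+ (q.-1 * m) != 1)] =
   [set s : F | s != 0] :\: [set s : F | s ^+ (q.-1 * m) == 1].
  by apply/setP => s; rewrite !inE andbC.
rewrite cardsD.
have -> : [set s : F | s != 0] :&: [set s : F | s ^+ (q.-1 * m) == 1] =
   [set s : F | s ^+ (q.-1 * m) == 1].
  apply/setP => s; rewrite !inE; case: eqP => [->|] //=.
  by rewrite expr0n gtn_eqF // eq_sym oner_eq0.
rewrite (card_S hF hm q1).
have -> : #|[set s : F | s != 0]| = #|F|.-1.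
  by rewrite -(cardC1 0); apply: eq_card => s; rewrite inE.
rewrite NE; lia.
Qed.

Lemma exists_chi (F : finFieldType) q m : #|F| = (q ^ 2)%N -> q.+1 = (m * 2)%N ->
  (1 < q)%N -> exists c : F, c != 0 /\ c ^+ (q.-1 * m) = -1.
Proof.
move=> hF hm q1; have NE := Nval hF hm.
have pos : (0 < q.-1 * m)%N by rewrite muln_gt0; apply/andP; split; lia.
have [g pg] := exists_prim F.
have gnz : g != 0 by rewrite (prim_root_eq0 pg) NE; lia.
exists g; split => //.
case: (chi_pm hF hm q1 gnz) => // h.
have : (#|F|.-1 %| q.-1 * m)%N by rewrite (prim_order_dvd pg) h.
rewrite NE => /dvdn_leq; lia.
Qed.
Lemma sum_exch (R : realType) (F : finFieldType) (f : F -> R) (T : {set F}) :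
  \sum_v \sum_(s in T) f (v - s) = #|T|%:R * \sum_v f v.
Proof.
rewrite exchange_big /= mulr_natl -sumr_const; apply: eq_bigr => s _.
by rewrite [RHS](reindex_inj (addIr (- s))).
Qed.

Lemma adj_sum (R : realType) (F : finFieldType) q m (f : F -> R) (v : F) :
  #|F| = (q ^ 2)%N -> q.+1 = (m * 2)%N -> (1 < q)%N ->
  \sum_(y | paley_adj v y) f y = \sum_(s in [set s : F | s ^+ (q.-1 * m) == 1]) f (v - s).
Proof.
move=> hF hm q1; rewrite (reindex_inj (subrI v)) /=; apply: eq_bigl => s.
by rewrite (adjE _ _ hF hm q1) subKr inE.
Qed.

Lemma split_sum (R : realType) (F : finFieldType) q m (f : F -> R) (v : F) :
  (1 < q)%N -> (0 < m)%N ->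
  \sum_s f (v - s) = f v + \sum_(s in [set s : F | s ^+ (q.-1 * m) == 1]) f (v - s)
     + \sum_(s in [set s : F | (s != 0) && (s ^+ (q.-1 * m) != 1)]) f (v - s).
Proof.
move=> q1 m0.
have pos : (0 < q.-1 * m)%N by rewrite muln_gt0; apply/andP; split; lia.
rewrite (bigD1 0) //= subr0 -addrA; congr (_ + _).
rewrite (bigID (fun s => s ^+ (q.-1 * m) == 1)) /=; congr (_ + _); apply: eq_bigl => s; rewrite inE //.
case: eqP => [->|] //=; by rewrite expr0n gtn_eqF // eq_sym oner_eq0.
Qed.

Lemma norm_sum_bound (R : realType) (F : finFieldType) (f : F -> R) (P : pred F) (M : R) :
  (forall y, `|f y| <= M) ->
  `|\sum_(y | P y) f y| <= #|[set y | P y && (f y != 0)]|%:R * M.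
Proof.
move=> hM; rewrite (bigID (fun y => f y != 0)) /= [X in _ + X]big1; last first.
  by move=> y /andP [_ /negPn /eqP].
rewrite addr0 mulr_natl -sumr_const.
apply: le_trans (ler_norm_sum _ _ _) _.
rewrite (eq_bigl (fun y => y \in [set y | P y && (f y != 0)])); last by move=> y; rewrite inE.
by apply: ler_sum => y _.
Qed.

Lemma lower (R : realType) (F : finFieldType) (f : F -> R) (lam : R) (adj : rel F) (x0 : F) n :
  f x0 != 0 -> (forall x, \sum_(y | adj x y) f y = lam * f x) -> (forall x, ~~ adj x x) ->
  \sum_y f y = 0 -> n%:R <= `|lam| + `|1 + lam| -> (n.+1 <= #|supp f|)%N.
Proof.
move=> fx0 heig hirr hsum hn.
case: (@arg_maxP _ R F x0 xpredT (fun y => `|f y|) isT) => x _ hx.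
have hM : forall y, `|f y| <= `|f x| by move=> y; exact: hx.
have Mpos : 0 < `|f x| by apply: lt_le_trans (hM x0); rewrite normr_gt0.
set A1 := [set y | adj x y && (f y != 0)].
set A2 := [set y | ((y != x) && ~~ adj x y) && (f y != 0)].
have b1 : `|lam| * `|f x| <= #|A1|%:R * `|f x|.
  by rewrite -normrM -heig; apply: norm_sum_bound.
have e2 : \sum_(y | (y != x) && ~~ adj x y) f y = - ((1 + lam) * f x).
  move: hsum; rewrite (bigD1 x) //= (bigID (adj x)) /=.
  have ea : forall y, (y != x) && adj x y = adj x y.
    by move=> y; case: (eqVneq y x) => [->|//]; rewrite (negbTE (hirr x)).
  rewrite (eq_bigl _ _ ea).
  rewrite heig => h; apply/eqP; rewrite -addr_eq0; apply/eqP; rewrite -[RHS]h; ring.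
have b2 : `|1 + lam| * `|f x| <= #|A2|%:R * `|f x|.
  by rewrite -normrM -normrN -e2; apply: norm_sum_bound.
have fxnz : f x != 0 by rewrite -normr_gt0.
have hsub : x |: (A1 :|: A2) \subset supp f.
  apply/subsetP => y; rewrite !inE => /orP [/eqP ->|/orP [/andP [_ ->]|/andP [_ ->]]] //.
have hx12 : x \notin A1 :|: A2 by rewrite !inE (negbTE (hirr x)) eqxx.
have hdis : A1 :&: A2 = set0.
  by apply/setP => y; rewrite !inE; case: (adj x y); rewrite ?andbF.
have hc : (#|A1| + #|A2| < #|supp f|)%N.
  apply: leq_trans (subset_leq_card hsub); rewrite cardsU1 hx12 cardsU hdis cards0 subn0.
  by [].
have : n%:R * `|f x| <= (#|A1| + #|A2|)%:R * `|f x|.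
  rewrite natrD mulrDl; apply: le_trans (lerD b1 b2); rewrite -mulrDl.
  by rewrite ler_pM2r.
rewrite ler_pM2r // ler_nat => h; exact: leq_ltn_trans h hc.
Qed.
Lemma sum_zero_of_eig (R : realType) (F : finFieldType) q m (f : F -> R) (lam : R) :
  #|F| = (q ^ 2)%N -> q.+1 = (m * 2)%N -> (1 < q)%N ->
  (forall v, \sum_(y | paley_adj v y) f y = lam * f v) ->
  lam != (q.-1 * m)%:R -> \sum_v f v = 0.
Proof.
move=> hF hm q1 heig hl.
have e : \sum_v lam * f v = (q.-1 * m)%:R * \sum_v f v.
  rewrite -(card_S hF hm q1) -sum_exch; apply: eq_bigr => v _.
  by rewrite -heig (adj_sum _ _ hF hm q1).
move: e; rewrite -mulr_sumr => /eqP; rewrite -subr_eq0 -mulrBl mulf_eq0 subr_eq0 (negbTE hl).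
by move=> /eqP.
Qed.

Lemma card_scale (F : finFieldType) (c : F) (P : pred F) : c != 0 ->
  #|[set x : F | P (c * x)]| = #|[set x : F | P x]|.
Proof.
move=> cnz; rewrite -(card_imset _ (mulfI cnz)); apply: eq_card => y.
rewrite inE; apply/imsetP/idP => [[x]|Py]; first by rewrite inE => Px ->.
by exists (c^-1 * y); rewrite ?inE mulrA mulfV // mul1r.
Qed.

Lemma supp_fU (R : realType) (F : finFieldType) q m (c : F) : c != 0 ->
  #|F| = (q ^ 2)%N -> q.+1 = (m * 2)%N -> (1 < q)%N ->
  #|supp (fun x : F => fU R q m (c * x))| = q.+1.
Proof.
move=> cnz hF hm q1; rewrite -(card_U hF hm q1) /supp.
rewrite -(card_scale (fun y : F => y ^+ q.+1 == 1) cnz); apply: eq_card => x.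
rewrite !inE /fU; case: (_ ^+ q.+1 == 1); last by rewrite eqxx.
by case: (_ == 1); rewrite ?oppr_eq0 oner_eq0.
Qed.

Lemma fU_nz (R : realType) (F : finFieldType) q m (c : F) : c != 0 ->
  exists x, fU R q m (c * x) != 0.
Proof.
by move=> cnz; exists c^-1; rewrite mulfV // /fU !expr1n eqxx oner_eq0.
Qed.

Lemma constr_neg (R : realType) (F : finFieldType) q m (c : F) :
  #|F| = (q ^ 2)%N -> q.+1 = (m * 2)%N -> (1 < q)%N ->
  (forall x y : F, (x + y) ^+ q = x ^+ q + y ^+ q) ->
  (forall x : F, (x ^+ q) ^+ q = x) -> (1 : F) != -1 ->
  c != 0 -> c ^+ (q.-1 * m) * (-1) ^+ m = -1 ->
  forall v, \sum_(y | paley_adj v y) fU R q m (c * y) = - (m%:R) * fU R q m (c * v).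
Proof.
move=> hF hm q1 hfrob hqq h2 cnz hc v.
have q0 : (0 < q)%N by lia.
have pos : (0 < q.-1 * m)%N by rewrite muln_gt0; apply/andP; split; lia.
set S := [set s : F | s ^+ (q.-1 * m) == 1].
have hT : forall t s, t \in Kset F q -> t != 0 -> s \in S -> t * s \in S.
  by move=> t s tK tnz; rewrite !inE exprMn (chiK m q0 tK tnz) mul1r.
have hl : forall v s, s \in S -> \sum_(t in Kset F q) fU R q m (c * (v + t * s)) = 0.
  move=> w s; rewrite inE => /eqP hs.
  have snz : s != 0 by apply/eqP => s0; move: hs; rewrite s0 expr0n gtn_eqF // => /eqP; rewrite eq_sym oner_eq0.
  rewrite (eq_bigr (fun t => fU R q m (c * w + t * (c * s)))); last by move=> t _; rewrite mulrDr mulrCA.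
  by apply: (line_sum R hm q1 hfrob hqq h2 (c * w) (mulf_neq0 cnz snz)); rewrite exprMn hs mulr1.
have := nbr (f := fun x => fU R q m (c * x)) hT hl q0 (card_Kset hF hm q1) (m1K hfrob q0) v.
rewrite (card_S hF hm q1) natrM (adj_sum _ _ hF hm q1) => e.
have q1R : (q.-1)%:R != 0 :> R by rewrite pnatr_eq0; lia.
apply: (mulIf q1R); rewrite e; ring.
Qed.

Lemma constr_pos (R : realType) (F : finFieldType) q m (c : F) :
  #|F| = (q ^ 2)%N -> q.+1 = (m * 2)%N -> (1 < q)%N ->
  (forall x y : F, (x + y) ^+ q = x ^+ q + y ^+ q) ->
  (forall x : F, (x ^+ q) ^+ q = x) -> (1 : F) != -1 ->
  c != 0 -> c ^+ (q.-1 * m) * (-1) ^+ m = 1 ->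
  forall v, \sum_(y | paley_adj v y) fU R q m (c * y) = (m%:R - 1) * fU R q m (c * v).
Proof.
move=> hF hm q1 hfrob hqq h2 cnz hc.
have q0 : (0 < q)%N by lia.
have m0 : (0 < m)%N by lia.
have pos : (0 < q.-1 * m)%N by rewrite muln_gt0; apply/andP; split; lia.
set g := fun x => fU R q m (c * x).
set T := [set s : F | (s != 0) && (s ^+ (q.-1 * m) != 1)].
have hT : forall t s, t \in Kset F q -> t != 0 -> s \in T -> t * s \in T.
  move=> t s tK tnz; rewrite !inE => /andP [snz hs].
  by rewrite mulf_neq0 // exprMn (chiK m q0 tK tnz) mul1r.
have hl : forall v s, s \in T -> \sum_(t in Kset F q) g (v + t * s) = 0.
  move=> w s; rewrite inE => /andP [snz hs].
  have hs' : s ^+ (q.-1 * m) = -1 by case: (chi_pm hF hm q1 snz) => // h; rewrite h eqxx in hs.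
  rewrite (eq_bigr (fun t => fU R q m (c * w + t * (c * s)))); last by move=> t _; rewrite /g mulrDr mulrCA.
  by apply: (line_sum R hm q1 hfrob hqq h2 (c * w) (mulf_neq0 cnz snz)); rewrite exprMn hs' mulrN1 mulNr hc.
have q1R : (q.-1)%:R != 0 :> R by rewrite pnatr_eq0; lia.
have hNS : forall v, \sum_(s in T) g (v - s) = - (m%:R) * g v.
  move=> v; have := nbr (f := g) hT hl q0 (card_Kset hF hm q1) (m1K hfrob q0) v.
  rewrite (card_NS hF hm q1) natrM => e; apply: (mulIf q1R); rewrite e; ring.
have hsum : \sum_v g v = 0.
  have e : \sum_v (- (m%:R) * g v) = (q.-1 * m)%:R * \sum_v g v.
    by rewrite -(card_NS hF hm q1) -sum_exch; apply: eq_bigr => v _; rewrite hNS.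
  move: e; rewrite -mulr_sumr natrM => /eqP.
  rewrite -subr_eq0 -mulrBl mulf_eq0 => /orP [/eqP h|/eqP //]; exfalso.
  have m0R : (0:R) < m%:R by rewrite ltr0n.
  have q0R : (0:R) <= (q.-1)%:R by [].
  clear -h m0R q0R; nra.
move=> v; rewrite (adj_sum _ _ hF hm q1).
have := split_sum g v q1 m0.
have e0 : \sum_s g (v - s) = 0.
  by rewrite -[RHS]hsum [RHS](reindex_inj (subrI v)).
rewrite e0 hNS => /eqP.
rewrite eq_sym -subr_eq0 => /eqP e.
move: e; rewrite /g subr0; set X := \sum_(s in _) _; set Y := fU _ _ _ (c * v) => e.
clear -e; lra.
Qed.
Unset Implicit Arguments.

Theorem mainTheorem7 (R : realType) (q : nat) (F : finFieldType)
  (hq : odd_prime_power q) (hF : #|F| = (q ^ 2)%N) (lam : R)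
  (hlam : lam = (q%:R - 1) / 2 \/ lam = (- 1 - q%:R) / 2) :
  (exists f : F -> R, paley_eigenfunction lam f /\ #|supp f| = q.+1) /\
  (forall f : F -> R, paley_eigenfunction lam f -> (q.+1 <= #|supp f|)%N).
Proof.
case: hq => p [k [pp op k0 hqk]].
have p1 := prime_gt1 pp.
have q1 : (1 < q)%N.
  by rewrite hqk (leq_trans p1) // -{1}(expn1 p) leq_pexp2l // ltnW.
have q0 : (0 < q)%N by lia.
have oq : odd q by rewrite hqk oddX op orbT.
set m := (q.+1)./2.
have hm : q.+1 = (m * 2)%N.
  rewrite muln2 /m; have := odd_double_half q.+1; rewrite /= oq /= add0n.
  by move=> ->.
have m0 : (0 < m)%N by lia.
have hpc : p \in [pchar F] by apply: (card_finPcharP (n := (k * 2)%N)) => //; rewrite hF hqk -expnM.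
have hfrob : forall x y : F, (x + y) ^+ q = x ^+ q + y ^+ q.
  by move=> x y; apply: exprDn_pchar; rewrite hqk pnatX (pnatE _ pp) hpc.
have hqq : forall x : F, (x ^+ q) ^+ q = x by move=> x; rewrite -exprM mulnn -hF expf_card.
have h2 : (1 : F) != -1.
  apply/eqP => e; have : (2%:R : F) == 0 by rewrite mulr2n {1}e addNr.
  rewrite -(dvdn_pcharf hpc) => /dvdn_leq h; have p2 : p = 2%N by lia.
  by rewrite p2 in op.
have hmR : (m%:R : R) * 2 = q%:R + 1 by rewrite -natrM -hm natr1.
have hq1R : (q.-1)%:R = q%:R - 1 :> R by rewrite -[in RHS](prednK q0) -natr1 addrK.
have q2R : 2%:R <= q%:R :> R by rewrite ler_nat.
split.
  have hs : ((-1 : F) ^+ m = 1) \/ ((-1 : F) ^+ m = -1).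
    by rewrite -signr_odd; case: (odd m); [right|left]; rewrite ?expr1 ?expr0.
  have sgn2 : (-1 : F) ^+ m * (-1) ^+ m = 1 by case: hs => ->; rewrite ?mulr1 ?mulrNN ?mulr1.
  have getc : forall e : F, e = 1 \/ e = -1 -> exists c : F, c != 0 /\ c ^+ (q.-1 * m) = e.
    move=> e [->|->]; first by exists 1; rewrite oner_eq0 expr1n.
    exact: exists_chi hF hm q1.
  case: hlam => ->.
    have [c [cnz hc]] := getc _ hs.
    exists (fun x => fU R q m (c * x)); split; last exact: supp_fU.
    split; first exact: fU_nz.
    move=> v; rewrite (constr_pos R hF hm q1 hfrob hqq h2 cnz (_ : _ = 1) v); last by rewrite hc.
    congr (_ * _); clear -hmR; lra.
  have hs' : - (-1 : F) ^+ m = 1 \/ - (-1 : F) ^+ m = -1.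
    by case: hs => ->; rewrite ?opprK; [right|left].
  have [c [cnz hc]] := getc _ hs'.
  exists (fun x => fU R q m (c * x)); split; last exact: supp_fU.
  split; first exact: fU_nz.
  move=> v; rewrite (constr_neg R hF hm q1 hfrob hqq h2 cnz (_ : _ = -1) v); last by rewrite hc mulNr sgn2.
  congr (_ * _); clear -hmR; lra.
move=> f [[x0 fx0] heig].
apply: (lower (adj := paley_adj (F:=F)) fx0 heig).
- by move=> x; rewrite /paley_adj eqxx.
- apply: (sum_zero_of_eig hF hm q1 heig); rewrite natrM hq1R.
  apply/eqP => e; case: hlam => hl; rewrite hl in e; clear -e hmR q2R; nra.
- have a1 := ler_norm lam; have a2 := ler_norm (- lam); rewrite normrN in a2.
  have b1 := ler_norm (1 + lam); have b2 := ler_norm (- (1 + lam)); rewrite normrN in b2.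
  case: hlam => hl; rewrite hl in a1 a2 b1 b2 *; clear -a1 a2 b1 b2; lra.
Qed.
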